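(* Let $(\mathcal{J}_g)_{g\in[G]}$ be subsets of $[p]$ with $\bigcup_g\mathcal{J}_g=[p]$, $p_g=|\mathcal{J}_g|$, and suppose there is a constant $C_1>0$ with $\max_{j\in[p]}|\{g:j\in\mathcal{J}_g\}|\le C_1$. Let $A=\delta vu^\top\in\mathbb{R}^{p\times(n-1)}$ with $\delta>0$, $v\in\mathbb{R}^p$, $u\in\mathbb{R}^{n-1}$, $\|v\|_2=\|u\|_2=1$ and $\sum_{g:v_{\mathcal{J}_g}\ne0}p_g\le k$. Suppose $T\in\mathbb{R}^{p\times(n-1)}$ satisfies $\|T-A\|_{\mathrm{grp}*}\le\lambda$ for some $\lambda>0$, and let $\mathcal{S}=\{M\in\mathbb{R}^{p\times(n-1)}:\|M\|_{\mathrm F}\le1\}$. Then for any $\hat M\in\operatorname*{argmax}_{M\in\mathcal{S}}\{\langle T,M\rangle-\lambda\|M\|_{\mathrm{grp}}\}$, \[ \|vu^\top-\hat M\|_{\mathrm F}\le\frac{4\lambda(C_1nk)^{1/2}}{\delta}, \] and, letting $\hat v,\hat u$ be leading left and right singular vectors of $\hat M$, \[ \max\{\sin\angle(v,\hat v),\sin\angle(u,\hat u)\}\le\frac{8\lambda(C_1nk)^{1/2}}{\delta}. \]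
   Context: $\|M\|_{\mathrm{grp}}=\sum_{g=1}^Gp_g^{1/2}\sum_{t}\|M_{\mathcal{J}_g,t}\|_2$ and $\|R\|_{\mathrm{grp}*}=\max_{g}\max_{t}p_g^{-1/2}\|R_{\mathcal{J}_g,t}\|_2$, where $M_{\mathcal{J}_g,t}$ is the vector of entries of the $t$th column of $M$ with rows in $\mathcal{J}_g$; $\langle A,B\rangle=\mathrm{tr}(A^\top B)$; $\sin\angle(a,b)=\sqrt{1-(a^\top b)^2}$ for unit vectors $a,b$. *)

(* Defs.v *)
From mathcomp Require Import all_boot all_order all_algebra.
From mathcomp Require Import reals.
Set Implicit Arguments. Unset Strict Implicit. Unset Printing Implicit Defensive.
Import Order.TTheory GRing.Theory Num.Theory.
Local Open Scope ring_scope.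

Section Defs.
Variable R : realType.

Definition frob (m n : nat) (M : 'M[R]_(m, n)) : R :=
  Num.sqrt (\sum_i \sum_j M i j ^+ 2).

Definition vnorm (m : nat) (x : 'cV[R]_m) : R := Num.sqrt (\sum_i x i ord0 ^+ 2).

Definition minner (m n : nat) (A B : 'M[R]_(m, n)) : R := \tr (A^T *m B).

Definition blocknorm (m n : nat) (J : {set 'I_m}) (M : 'M[R]_(m, n)) (t : 'I_n) : R :=
  Num.sqrt (\sum_(j in J) M j t ^+ 2).

Definition grpnorm (G m n : nat) (J : 'I_G -> {set 'I_m}) (M : 'M[R]_(m, n)) : R :=
  \sum_(g < G) Num.sqrt (#|J g|%:R) * \sum_(t < n) blocknorm (J g) M t.

Definition grpdual (G m n : nat) (J : 'I_G -> {set 'I_m}) (M : 'M[R]_(m, n)) : R :=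
  \big[Num.max/0]_(g < G) \big[Num.max/0]_(t < n)
     ((Num.sqrt (#|J g|%:R))^-1 * blocknorm (J g) M t).

Definition sin_angle (m : nat) (a b : 'cV[R]_m) : R :=
  Num.sqrt (1 - ((a^T *m b) ord0 ord0) ^+ 2).

Definition singular_triple (m n : nat) (M : 'M[R]_(m, n)) (s : R)
    (x : 'cV[R]_m) (y : 'cV[R]_n) : Prop :=
  [/\ 0 <= s, vnorm x = 1, vnorm y = 1, M *m y = s *: x & M^T *m x = s *: y].

Definition leading_singular_vectors (m n : nat) (M : 'M[R]_(m, n))
    (x : 'cV[R]_m) (y : 'cV[R]_n) : Prop :=
  exists s, singular_triple M s x y /\
    forall s' x' y', singular_triple M s' x' y' -> s' <= s.

End Defs.

(* Main.v *)
Require Import Defs.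
From mathcomp Require Import all_boot all_order all_algebra.
From mathcomp Require Import reals.
From mathcomp Require Import all_classical all_reals all_analysis.
From mathcomp Require Import ring lra.
Set Implicit Arguments. Unset Strict Implicit. Unset Printing Implicit Defensive.
Import Order.TTheory GRing.Theory Num.Theory.
Import numFieldNormedType.Exports.
Local Open Scope ring_scope.

Section Analysis.
Local Open Scope classical_set_scope.
Lemma sum_continuous (R : realType) q (I : finType) (F : I -> 'rV[R]_q -> R) :
  (forall i, continuous (F i)) -> continuous (fun r => \sum_i F i r).
Proof.
move=> Fc.
suff H : forall s : seq I, continuous (fun r => \sum_(i <- s) F i r) by exact: H.
elim=> [|i s IH].
  have -> : (fun r : 'rV[R]_q => \sum_(i <- [::]) F i r) = fun=> 0.
    by apply/funext => r; rewrite big_nil.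
  exact: cst_continuous.
have -> : (fun r => \sum_(j <- i :: s) F j r) = (F i + fun r => \sum_(j <- s) F j r).
  by apply/funext => r; rewrite big_cons.
by move=> x; apply: continuousD; [apply: Fc|apply: IH].
Qed.

Lemma max_ball (R : realType) q (f : 'rV[R]_q -> R) : continuous f ->
  exists2 c : 'rV[R]_q, (\sum_j c ord0 j ^+ 2 <= 1) &
    forall r : 'rV[R]_q, \sum_j r ord0 j ^+ 2 <= 1 -> f r <= f c.
Proof.
move=> fc.
set B := [set r : 'rV[R]_q | \sum_j r ord0 j ^+ 2 <= 1].
have gc : continuous (fun r : 'rV[R]_q => \sum_j r ord0 j ^+ 2).
  apply: sum_continuous => j x.
  have -> : (fun r : 'rV[R]_q => r ord0 j ^+ 2) =
     (fun r : 'rV[R]_q => r ord0 j) \* (fun r : 'rV[R]_q => r ord0 j).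
    by apply/funext => r /=; rewrite expr2.
  apply: continuousM.
  - exact: coord_continuous.
  - exact: coord_continuous.
have Bcl : closed B.
  have -> : B = (fun r : 'rV[R]_q => \sum_j r ord0 j ^+ 2) @^-1` [set x | x <= 1].
    by [].
  apply: preimage_closed; last exact: closed_le.
  by move=> x _; apply: gc.
have Box : compact [set v : 'rV[R]_q | forall i, (`[(-1 : R), 1]%classic) (v ord0 i)].
  exact: (@rV_compact R q (fun=> `[(-1 : R), 1]%classic) (fun=> @segment_compact R (-1) 1)).
have Bc : compact B.
  apply: subclosed_compact Bcl Box _ => r /= Hr i.
  rewrite in_itv /= -ler_norml.
  have : r ord0 i ^+ 2 <= 1.
    apply: le_trans Hr.
    rewrite (bigD1 i) //= lerDl.
    by apply: sumr_ge0 => j _; apply: sqr_ge0.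
  by rewrite -real_normK ?num_real // expr_le1.
have B0 : B !=set0.
  exists 0; rewrite /B /=.
  by rewrite big1 // => j _; rewrite mxE expr0n.
have [c cB cmax] := EVT_max_rV B0 Bc (continuous_subspaceT fc).
exists c; first by move: cB; rewrite inE.
by move=> r Hr; apply: cmax; rewrite inE.
Qed.

End Analysis.

Section Alg.
Variable R : realType.

Lemma sqrt_leP (x c : R) : 0 <= c -> x <= c ^+ 2 -> Num.sqrt x <= c.
Proof.
move=> c0 xc; rewrite -(ger0_norm c0) -sqrtr_sqr ler_sqrt //.
exact: sqr_ge0.
Qed.

Lemma sqrt_geP (x c : R) : 0 <= c -> c ^+ 2 <= x -> c <= Num.sqrt x.
Proof.
move=> c0 cx; rewrite -(ger0_norm c0) -sqrtr_sqr ler_sqrt //.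
exact: le_trans (sqr_ge0 c) cx.
Qed.

Lemma CS (I : finType) (P : pred I) (a b : I -> R) :
  (\sum_(i | P i) a i * b i) ^+ 2 <=
  (\sum_(i | P i) a i ^+ 2) * (\sum_(i | P i) b i ^+ 2).
Proof.
rewrite -subr_ge0.
have H : 2 * ((\sum_(i | P i) a i ^+ 2) * (\sum_(i | P i) b i ^+ 2)
   - (\sum_(i | P i) a i * b i) ^+ 2) =
  \sum_(i | P i) \sum_(j | P j) (a i * b j - a j * b i) ^+ 2.
  have E1 : \sum_(i | P i) \sum_(j | P j) (a i * b j - a j * b i) ^+ 2 =
    \sum_(i | P i) \sum_(j | P j) (a i ^+ 2 * b j ^+ 2)
    + \sum_(i | P i) \sum_(j | P j) (a j ^+ 2 * b i ^+ 2)
    - 2 * \sum_(i | P i) \sum_(j | P j) (a i * b i * (a j * b j)).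
    rewrite mulr_sumr -big_split -sumrB /=; apply: eq_bigr => i _.
    rewrite mulr_sumr -big_split -sumrB /=; apply: eq_bigr => j _.
    ring.
  have S1 : (\sum_(i | P i) a i ^+ 2) * (\sum_(i | P i) b i ^+ 2) =
      \sum_(i | P i) \sum_(j | P j) (a i ^+ 2 * b j ^+ 2).
    by rewrite mulr_suml; apply: eq_bigr => i _; rewrite mulr_sumr.
  have S2 : (\sum_(i | P i) a i * b i) ^+ 2 =
      \sum_(i | P i) \sum_(j | P j) (a i * b i * (a j * b j)).
    by rewrite expr2 mulr_suml; apply: eq_bigr => i _; rewrite mulr_sumr.
  have S3 : \sum_(i | P i) \sum_(j | P j) (a j ^+ 2 * b i ^+ 2) =
      \sum_(i | P i) \sum_(j | P j) (a i ^+ 2 * b j ^+ 2).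
    by rewrite exchange_big.
  rewrite E1 S3 S1 S2; ring.
have : 0 <= \sum_(i | P i) \sum_(j | P j) (a i * b j - a j * b i) ^+ 2.
  by apply: sumr_ge0 => i _; apply: sumr_ge0 => j _; apply: sqr_ge0.
rewrite -H pmulr_rge0 //.
Qed.


Lemma CSs (I : finType) (P : pred I) (a b : I -> R) :
  \sum_(i | P i) a i * b i <=
  Num.sqrt (\sum_(i | P i) a i ^+ 2) * Num.sqrt (\sum_(i | P i) b i ^+ 2).
Proof.
have A0 : 0 <= \sum_(i | P i) a i ^+ 2 by apply: sumr_ge0 => i _; apply: sqr_ge0.
rewrite -sqrtrM //; apply: le_trans (ler_norm _) _.
by rewrite -sqrtr_sqr ler_sqrt ?CS // mulr_ge0 // sumr_ge0 // => i _; apply: sqr_ge0.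
Qed.

Lemma Mink (I : finType) (P : pred I) (a b : I -> R) :
  Num.sqrt (\sum_(i | P i) (a i + b i) ^+ 2) <=
  Num.sqrt (\sum_(i | P i) a i ^+ 2) + Num.sqrt (\sum_(i | P i) b i ^+ 2).
Proof.
apply: sqrt_leP; first by rewrite addr_ge0 ?sqrtr_ge0.
have A0 : 0 <= \sum_(i | P i) a i ^+ 2 by apply: sumr_ge0 => i _; apply: sqr_ge0.
have B0 : 0 <= \sum_(i | P i) b i ^+ 2 by apply: sumr_ge0 => i _; apply: sqr_ge0.
have -> : \sum_(i | P i) (a i + b i) ^+ 2 = \sum_(i | P i) a i ^+ 2
   + 2 * \sum_(i | P i) a i * b i + \sum_(i | P i) b i ^+ 2.
  rewrite mulr_sumr -!big_split /=; apply: eq_bigr => i _; ring.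
have := CSs P a b.
rewrite sqrrD !sqr_sqrtr //.
move=> H; rewrite lerD2r -mulr_natl -mulrA; lra.
Qed.

Definition dotc m (x y : 'cV[R]_m) := \sum_i x i ord0 * y i ord0.

Lemma dotC m (x y : 'cV[R]_m) : dotc x y = dotc y x.
Proof. by apply: eq_bigr => i _; rewrite mulrC. Qed.

Lemma dotDl m (x y z : 'cV[R]_m) : dotc (x + y) z = dotc x z + dotc y z.
Proof. by rewrite /dotc -big_split; apply: eq_bigr => i _; rewrite !mxE mulrDl. Qed.

Lemma dotZl m a (x z : 'cV[R]_m) : dotc (a *: x) z = a * dotc x z.
Proof. by rewrite /dotc mulr_sumr; apply: eq_bigr => i _; rewrite !mxE mulrA. Qed.

Lemma dotNl m (x z : 'cV[R]_m) : dotc (- x) z = - dotc x z.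
Proof. by rewrite -scaleN1r dotZl mulN1r. Qed.

Lemma dotBl m (x y z : 'cV[R]_m) : dotc (x - y) z = dotc x z - dotc y z.
Proof. by rewrite dotDl dotNl. Qed.

Lemma dotDr m (x y z : 'cV[R]_m) : dotc z (x + y) = dotc z x + dotc z y.
Proof. by rewrite dotC dotDl !(dotC z). Qed.

Lemma dotZr m a (x z : 'cV[R]_m) : dotc z (a *: x) = a * dotc z x.
Proof. by rewrite dotC dotZl dotC. Qed.

Lemma dotBr m (x y z : 'cV[R]_m) : dotc z (x - y) = dotc z x - dotc z y.
Proof. by rewrite dotC dotBl !(dotC z). Qed.

Lemma dotxx m (x : 'cV[R]_m) : dotc x x = \sum_i x i ord0 ^+ 2.
Proof. by apply: eq_bigr => i _; rewrite expr2. Qed.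

Lemma dot_ge0 m (x : 'cV[R]_m) : 0 <= dotc x x.
Proof. by rewrite dotxx; apply: sumr_ge0 => i _; apply: sqr_ge0. Qed.

Lemma dot_eq0 m (x : 'cV[R]_m) : dotc x x = 0 -> x = 0.
Proof.
rewrite dotxx => /eqP; rewrite psumr_eq0 => [/allP H|i _]; last exact: sqr_ge0.
apply/matrixP => i j; rewrite ord1 mxE.
by have := H i (mem_index_enum _); rewrite /= sqrf_eq0 => /eqP.
Qed.

Lemma vnormE m (x : 'cV[R]_m) : vnorm x = Num.sqrt (dotc x x).
Proof. by rewrite /vnorm dotxx. Qed.

Lemma vnorm1 m (x : 'cV[R]_m) : vnorm x = 1 -> dotc x x = 1.
Proof.
rewrite vnormE => H; rewrite -(@sqr_sqrtr _ (dotc x x)) ?dot_ge0 //.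
by rewrite H expr1n.
Qed.

Lemma trdotc m (x y : 'cV[R]_m) : (x^T *m y) ord0 ord0 = dotc x y.
Proof. by rewrite mxE; apply: eq_bigr => i _; rewrite mxE. Qed.

Lemma dot_mul m n (A : 'M[R]_(m, n)) (y : 'cV[R]_n) (x : 'cV[R]_m) :
  dotc (A *m y) x = dotc y (A^T *m x).
Proof.
rewrite /dotc.
under eq_bigr do rewrite mxE mulr_suml.
rewrite exchange_big /=; apply: eq_bigr => j _.
rewrite mxE mulr_sumr; apply: eq_bigr => i _; rewrite mxE; ring.
Qed.

Lemma CSdotc m (x y : 'cV[R]_m) : dotc x y ^+ 2 <= dotc x x * dotc y y.
Proof. by rewrite !dotxx; apply: CS. Qed.

Lemma frob_sqr m n (A : 'M[R]_(m, n)) : frob A ^+ 2 = \sum_i \sum_j A i j ^+ 2.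
Proof.
rewrite sqr_sqrtr //; apply: sumr_ge0 => i _; apply: sumr_ge0 => j _.
exact: sqr_ge0.
Qed.

Lemma frob_ge0 m n (A : 'M[R]_(m, n)) : 0 <= frob A.
Proof. exact: sqrtr_ge0. Qed.

Lemma frob_tr m n (A : 'M[R]_(m, n)) : frob A^T = frob A.
Proof.
rewrite /frob exchange_big /=; congr Num.sqrt.
by apply: eq_bigr => i _; apply: eq_bigr => j _; rewrite mxE.
Qed.

Lemma opnorm m n (A : 'M[R]_(m, n)) (y : 'cV[R]_n) :
  dotc (A *m y) (A *m y) <= frob A ^+ 2 * dotc y y.
Proof.
rewrite dotxx frob_sqr mulr_suml; apply: ler_sum => i _.
rewrite mxE dotxx.
exact: (CS predT (fun j => A i j) (fun j => y j ord0)).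
Qed.

End Alg.



Lemma top_triple (R : realType) p q (A : 'M[R]_(p, q)) (y0 : 'cV[R]_q) :
  dotc y0 y0 = 1 -> 0 < dotc (A *m y0) (A *m y0) ->
  exists s x y, singular_triple A s x y /\ dotc (A *m y0) (A *m y0) <= s ^+ 2.
Proof.
move=> y01 Ay0.
set f := fun r : 'rV[R]_q => dotc (A *m r^T) (A *m r^T).
have fc : continuous f.
  have -> : f = fun r => \sum_i (\sum_j A i j * r ord0 j) ^+ 2.
    apply/funext => r; rewrite /f dotxx; apply: eq_bigr => i _.
    by rewrite mxE; congr (_ ^+ 2); apply: eq_bigr => j _; rewrite mxE.
  apply: sum_continuous => i.
  have -> : (fun r : 'rV[R]_q => (\sum_j A i j * r ord0 j) ^+ 2) =
     (fun r : 'rV[R]_q => \sum_j A i j * r ord0 j) \* (fun r : 'rV[R]_q => \sum_j A i j * r ord0 j).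
    by apply/funext => r /=; rewrite expr2.
  have sc : continuous (fun r : 'rV[R]_q => \sum_j A i j * r ord0 j).
    apply: sum_continuous => j x.
    by apply: continuousM; [exact: cst_continuous | exact: coord_continuous].
  by move=> x; apply: continuousM; apply: sc.
have [c cB cmax] := max_ball fc.
have ballE (y : 'cV[R]_q) : dotc y y <= 1 -> dotc (A *m y) (A *m y) <= f c.
  move=> Hy; have := cmax y^T; rewrite /f trmxK; apply.
  have -> : \sum_j y^T ord0 j ^+ 2 = \sum_i y i ord0 ^+ 2.
    by apply: eq_bigr => j _; rewrite mxE.
  by rewrite -dotxx.
set y1 := c^T.
have y1B : dotc y1 y1 <= 1.
  rewrite dotxx; apply: le_trans cB; rewrite le_eqVlt; apply/orP; left; apply/eqP.
  by apply: eq_bigr => j _; rewrite mxE.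
set s2 := dotc (A *m y1) (A *m y1).
have s2E : f c = s2 by [].
have Ay0s : dotc (A *m y0) (A *m y0) <= s2 by rewrite -s2E; apply: ballE; rewrite y01.
have s2pos : 0 < s2 by apply: lt_le_trans Ay0s.
have bound (z : 'cV[R]_q) : dotc (A *m z) (A *m z) <= s2 * dotc z z.
  have [z0|zn0] := eqVneq (dotc z z) 0.
    rewrite z0 mulr0 (dot_eq0 z0) mulmx0 /dotc big1 //.
    by move=> i _; rewrite mxE mul0r.
  have zpos : 0 < dotc z z by rewrite lt_neqAle eq_sym zn0 dot_ge0.
  set r := Num.sqrt (dotc z z).
  have rpos : 0 < r by rewrite sqrtr_gt0.
  have r2 : r ^+ 2 = dotc z z by rewrite sqr_sqrtr // dot_ge0.
  have := ballE (r^-1 *: z).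
  rewrite -scalemxAr !dotZl !dotZr.
  have -> : r^-1 * (r^-1 * dotc z z) = 1.
    by rewrite -r2; field; rewrite gt_eqF.
  move=> /(_ (lexx _)); rewrite s2E => H.
  rewrite -r2.
  have -> : dotc (A *m z) (A *m z) = r ^+ 2 * (r^-1 * (r^-1 * dotc (A *m z) (A *m z))).
    by field; rewrite gt_eqF.
  rewrite mulrC; apply: ler_wpM2r => //; exact: sqr_ge0.
have y1n : dotc y1 y1 = 1.
  apply/eqP; rewrite eq_le y1B /=.
  have := bound y1; rewrite -/s2 -{1}(mulr1 s2) ler_pM2l //.
set w := A^T *m (A *m y1) - s2 *: y1.
have y1w : dotc y1 w = 0.
  by rewrite /w dotBr dotZr y1n mulr1 -dot_mul subrr.
have Awy1 : dotc (A *m w) (A *m y1) = dotc w w.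
  rewrite dot_mul.
  have -> : A^T *m (A *m y1) = w + s2 *: y1 by rewrite /w subrK.
  by rewrite dotDr dotZr (dotC w y1) y1w mulr0 addr0.
have wE : A^T *m (A *m y1) = w + s2 *: y1 by rewrite /w subrK.
clearbody w.
have w0 : w = 0.
  have := bound (s2 *: y1 + w).
  rewrite mulmxDr -scalemxAr !dotDl !dotDr !dotZl !dotZr y1n -/s2.
  rewrite (dotC _ (A *m w)) Awy1 (dotC w y1) y1w.
  have := dot_ge0 (A *m w); have := dot_ge0 w.
  move=> W0 N0 H; apply: dot_eq0; apply/eqP; rewrite eq_le W0 andbT.
  nra.
have AAy : A^T *m (A *m y1) = s2 *: y1.
  by rewrite wE w0 add0r.
set s := Num.sqrt s2.
have spos : 0 < s by rewrite sqrtr_gt0.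
have ss : s ^+ 2 = s2 by rewrite sqr_sqrtr // ltW.
exists s, (s^-1 *: (A *m y1)), y1; split; last by rewrite ss.
split.
- exact: ltW.
- rewrite vnormE dotZl dotZr -/s2 -ss.
  have -> : s^-1 * (s^-1 * s ^+ 2) = 1 by field; rewrite gt_eqF.
  by rewrite sqrtr1.
- by rewrite vnormE y1n sqrtr1.
- by rewrite scalerA divff ?gt_eqF // scale1r.
- by rewrite -scalemxAr AAy scalerA -ss; congr (_ *: _); field; rewrite gt_eqF.
Qed.



Section E.
Variable R : realType.

Definition ip m n (A B : 'M[R]_(m, n)) := \sum_i \sum_j A i j * B i j.

Lemma minnerE m n (A B : 'M[R]_(m, n)) : minner A B = ip A B.
Proof.
rewrite /minner /mxtrace /ip exchange_big /=; apply: eq_bigr => j _.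
by rewrite mxE; apply: eq_bigr => i _; rewrite mxE.
Qed.

Lemma ipC m n (A B : 'M[R]_(m, n)) : ip A B = ip B A.
Proof. by apply: eq_bigr => i _; apply: eq_bigr => j _; rewrite mulrC. Qed.

Lemma ipDl m n (A B C : 'M[R]_(m, n)) : ip (A + B) C = ip A C + ip B C.
Proof.
rewrite /ip -big_split; apply: eq_bigr => i _.
by rewrite -big_split; apply: eq_bigr => j _; rewrite mxE mulrDl.
Qed.

Lemma ipZl m n a (A C : 'M[R]_(m, n)) : ip (a *: A) C = a * ip A C.
Proof.
rewrite /ip mulr_sumr; apply: eq_bigr => i _.
by rewrite mulr_sumr; apply: eq_bigr => j _; rewrite mxE mulrA.
Qed.

Lemma ipBl m n (A B C : 'M[R]_(m, n)) : ip (A - B) C = ip A C - ip B C.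
Proof. by rewrite ipDl -scaleN1r ipZl mulN1r. Qed.

Lemma ipDr m n (A B C : 'M[R]_(m, n)) : ip C (A + B) = ip C A + ip C B.
Proof. by rewrite ipC ipDl !(ipC C). Qed.

Lemma ipBr m n (A B C : 'M[R]_(m, n)) : ip C (A - B) = ip C A - ip C B.
Proof. by rewrite ipC ipBl !(ipC C). Qed.

Lemma ipZr m n a (A C : 'M[R]_(m, n)) : ip C (a *: A) = a * ip C A.
Proof. by rewrite ipC ipZl ipC. Qed.

Lemma frobE2 m n (A : 'M[R]_(m, n)) : frob A ^+ 2 = ip A A.
Proof.
rewrite frob_sqr; apply: eq_bigr => i _; apply: eq_bigr => j _; exact: expr2.
Qed.

Lemma le_bigmax0 (I : finType) (F : I -> R) i0 : F i0 <= \big[Num.max/0]_i F i.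
Proof. by rewrite (bigD1 i0) //= le_max lexx. Qed.

Lemma count_sum p G (J : 'I_G -> {set 'I_p}) (f : 'I_p -> R) :
  \sum_g \sum_(i in J g) f i = \sum_i (#|[set g | i \in J g]|%:R * f i).
Proof.
under eq_bigr do rewrite big_mkcond.
rewrite exchange_big /=; apply: eq_bigr => i _.
rewrite -big_mkcond /= mulr_natl -sumr_const.
by apply: eq_bigl => g; rewrite inE.
Qed.

End E.



Section F.
Variable R : realType.

Lemma bn_dual p q G (J : 'I_G -> {set 'I_p}) (E : 'M[R]_(p, q)) lambda g t :
  grpdual J E <= lambda ->
  blocknorm (J g) E t <= lambda * Num.sqrt (#|J g|%:R).
Proof.
move=> hd.
have [c0|cpos] := posnP #|J g|.
  rewrite c0 sqrtr0 mulr0 /blocknorm (cards0_eq c0) big_set0 sqrtr0 //.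
have sp : 0 < Num.sqrt (#|J g|%:R : R) by rewrite sqrtr_gt0 ltr0n.
have H := le_trans (le_trans (le_bigmax0 (fun t => (Num.sqrt (#|J g|%:R))^-1 * blocknorm (J g) E t) t)
   (le_bigmax0 (fun g => \big[Num.max/0]_(t < q) ((Num.sqrt (#|J g|%:R))^-1 * blocknorm (J g) E t)) g)) hd.
have -> : blocknorm (J g) E t = Num.sqrt (#|J g|%:R) * ((Num.sqrt (#|J g|%:R))^-1 * blocknorm (J g) E t).
  by field; rewrite gt_eqF.
by rewrite mulrC ler_wpM2r // ltW.
Qed.

Lemma dual_bound p q G (J : 'I_G -> {set 'I_p}) (E D : 'M[R]_(p, q)) lambda :
  (forall j : 'I_p, exists g : 'I_G, j \in J g) ->
  grpdual J E <= lambda ->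
  - ip E D <= lambda * grpnorm J D.
Proof.
move=> cover hd.
have S1 : - ip E D <= \sum_t \sum_i `|E i t| * `|D i t|.
  rewrite /ip exchange_big /= -sumrN; apply: ler_sum => t _.
  rewrite -sumrN; apply: ler_sum => i _.
  by rewrite -normrM; have := ler_norm (- (E i t * D i t)); rewrite normrN.
apply: le_trans S1 _.
have S2 : forall t, \sum_i `|E i t| * `|D i t| <=
   \sum_g \sum_(i in J g) `|E i t| * `|D i t|.
  move=> t; rewrite count_sum; apply: ler_sum => i _.
  rewrite -{1}(mul1r (_ * _)); apply: ler_wpM2r; first by rewrite mulr_ge0.
  rewrite ler1n; apply/card_gt0P; have [g Hg] := cover i; exists g; by rewrite inE.
apply: le_trans (_ : _ <= \sum_t \sum_g \sum_(i in J g) `|E i t| * `|D i t|) _.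
  by apply: ler_sum => t _; apply: S2.
have -> : lambda * grpnorm J D = \sum_t \sum_g lambda * Num.sqrt (#|J g|%:R) * blocknorm (J g) D t.
  rewrite /grpnorm mulr_sumr exchange_big /=; apply: eq_bigr => g _.
  by rewrite mulr_sumr mulr_sumr; apply: eq_bigr => t _; rewrite mulrA.
apply: ler_sum => t _; apply: ler_sum => g _.
apply: le_trans (CSs _ _ _) _.
have -> : \sum_(i in J g) `|E i t| ^+ 2 = \sum_(i in J g) E i t ^+ 2.
  by apply: eq_bigr => i _; rewrite real_normK ?num_real.
have -> : \sum_(i in J g) `|D i t| ^+ 2 = \sum_(i in J g) D i t ^+ 2.
  by apply: eq_bigr => i _; rewrite real_normK ?num_real.
rewrite -/(blocknorm (J g) E t) -/(blocknorm (J g) D t).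
by apply: ler_wpM2r; [exact: sqrtr_ge0 | exact: bn_dual].
Qed.

End F.



Section G.
Variable R : realType.

Lemma Ms_entry p q (v : 'cV[R]_p) (u : 'cV[R]_q) i j :
  (v *m u^T) i j = v i ord0 * u j ord0.
Proof. by rewrite mxE big_ord1 mxE. Qed.

Lemma grp_split p q G (J : 'I_G -> {set 'I_p}) (v : 'cV[R]_p) (u : 'cV[R]_q)
  (Mh : 'M[R]_(p, q)) :
  grpnorm J (v *m u^T - Mh) + grpnorm J (v *m u^T) - grpnorm J Mh <=
  2 * \sum_(g | [exists j in J g, v j ord0 != 0]) Num.sqrt (#|J g|%:R) *
        \sum_t blocknorm (J g) (v *m u^T - Mh) t.
Proof.
set Ms := v *m u^T; set D := Ms - Mh.
rewrite /grpnorm -big_split -sumrB /= mulr_sumr [X in _ <= X]big_mkcond /=.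
apply: ler_sum => g _.
set sp := Num.sqrt _.
have sp0 : 0 <= sp by exact: sqrtr_ge0.
case: ifP => [_|/negbT/existsPn Hv].
  have HB : \sum_t blocknorm (J g) Ms t <=
     \sum_t blocknorm (J g) D t + \sum_t blocknorm (J g) Mh t.
    rewrite -big_split; apply: ler_sum => t _ /=.
    rewrite /blocknorm.
    have -> : \sum_(j in J g) Ms j t ^+ 2 = \sum_(j in J g) (D j t + Mh j t) ^+ 2.
      by apply: eq_bigr => j _; rewrite /D !mxE subrK.
    exact: Mink.
  rewrite -mulrDr -mulrBr mulrA (mulrC 2) -mulrA; apply: ler_wpM2l => //.
  lra.
have H0 : forall j, j \in J g -> v j ord0 = 0.
  by move=> j Hj; have := Hv j; rewrite Hj /= negbK => /eqP.
have E1 : \sum_t blocknorm (J g) Ms t = 0.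
  rewrite big1 // => t _; rewrite /blocknorm big1 ?sqrtr0 // => j Hj.
  by rewrite /Ms Ms_entry H0 // mul0r expr0n.
have E2 : \sum_t blocknorm (J g) D t = \sum_t blocknorm (J g) Mh t.
  apply: eq_bigr => t _; rewrite /blocknorm; congr Num.sqrt.
  apply: eq_bigr => j Hj; rewrite /D /Ms !mxE big_ord1 !mxE H0 //.
  by rewrite mul0r sub0r sqrrN.
by rewrite E1 E2 mulr0 addr0 subrr.
Qed.

End G.



Section H.
Variable R : realType.

Lemma CS1 q (x : 'I_q -> R) : (\sum_t x t) ^+ 2 <= q%:R * \sum_t x t ^+ 2.
Proof.
have H := CS predT (fun _ => 1) x.
have E1 : \sum_(i | predT i) 1 * x i = \sum_t x t by apply: eq_bigr => ? _; rewrite mul1r.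
have E2 : \sum_(i : 'I_q | predT i) (1 : R) ^+ 2 = q%:R.
  under eq_bigr do rewrite expr1n.
  by rewrite sumr_const card_ord.
by rewrite E1 E2 in H.
Qed.

Lemma sparse_bound p q G k (J : 'I_G -> {set 'I_p}) (S : pred 'I_G)
  (D : 'M[R]_(p, q)) C1 : 0 <= C1 ->
  (forall j : 'I_p, (#|[set g : 'I_G | j \in J g]|%:R : R) <= C1) ->
  (\sum_(g | S g) #|J g| <= k)%N ->
  \sum_(g | S g) Num.sqrt (#|J g|%:R) * \sum_t blocknorm (J g) D t <=
  Num.sqrt (k%:R) * Num.sqrt (q%:R * (C1 * frob D ^+ 2)).
Proof.
move=> C10 hC hk.
apply: le_trans (CSs _ _ _) _.
apply: ler_pM; try exact: sqrtr_ge0.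
  rewrite ler_sqrt ?ler0n //.
  have -> : \sum_(g | S g) Num.sqrt (#|J g|%:R : R) ^+ 2 = (\sum_(g | S g) #|J g|)%:R.
    by rewrite natr_sum; apply: eq_bigr => g _; rewrite sqr_sqrtr ?ler0n.
  by rewrite ler_nat.
have bn2 g t : blocknorm (J g) D t ^+ 2 = \sum_(j in J g) D j t ^+ 2.
  by rewrite sqr_sqrtr // sumr_ge0 // => j _; exact: sqr_ge0.
rewrite ler_sqrt; last by rewrite mulr_ge0 ?ler0n // mulr_ge0 // sqr_ge0.
apply: le_trans (_ : _ <= \sum_(g | S g) q%:R * \sum_t \sum_(j in J g) D j t ^+ 2) _.
  apply: ler_sum => g _.
  apply: le_trans (CS1 _) _.
  by under eq_bigr do rewrite bn2.
rewrite -mulr_sumr; apply: ler_wpM2l; first exact: ler0n.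
apply: le_trans (_ : _ <= \sum_g \sum_t \sum_(j in J g) D j t ^+ 2) _.
  rewrite [X in _ <= X](bigID S) /= lerDl.
  by apply: sumr_ge0 => g _; apply: sumr_ge0 => t _; apply: sumr_ge0 => j _; exact: sqr_ge0.
have -> : \sum_g \sum_t \sum_(j in J g) D j t ^+ 2 = \sum_g \sum_(j in J g) \sum_t D j t ^+ 2.
  by apply: eq_bigr => g _; rewrite exchange_big.
rewrite count_sum frob_sqr mulr_sumr; apply: ler_sum => j _.
apply: ler_wpM2r => //.
by apply: sumr_ge0 => t _; exact: sqr_ge0.
Qed.

End H.



Section I.
Variable R : realType.

Lemma part1 p q G k (J : 'I_G -> {set 'I_p})
  (C1 delta lambda : R) (v : 'cV[R]_p) (u : 'cV[R]_q) (T Mh : 'M[R]_(p, q)) :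
  (forall j : 'I_p, exists g : 'I_G, j \in J g) ->
  0 < C1 ->
  (forall j : 'I_p, (#|[set g : 'I_G | j \in J g]|%:R : R) <= C1) ->
  0 < delta ->
  vnorm v = 1 -> vnorm u = 1 ->
  (\sum_(g < G | [exists j in J g, v j ord0 != 0%R]) #|J g| <= k)%N ->
  0 < lambda ->
  grpdual J (T - delta *: (v *m u^T)) <= lambda ->
  frob Mh <= 1 ->
  (forall M : 'M[R]_(p, q), frob M <= 1 ->
     minner T M - lambda * grpnorm J M <= minner T Mh - lambda * grpnorm J Mh) ->
  frob (v *m u^T - Mh) <= 4 * lambda * Num.sqrt (C1 * q%:R * k%:R) / delta.
Proof.
move=> cover C1pos hC dpos hv hu hk lpos hgd hMh hopt.
set Ms := v *m u^T; set D := Ms - Mh; set E := T - delta *: Ms.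
have v1 := vnorm1 hv; have u1 := vnorm1 hu.
have ipMs : ip Ms Ms = 1.
  have -> : ip Ms Ms = dotc v v * dotc u u.
    rewrite /dotc mulr_suml; apply: eq_bigr => i _; rewrite mulr_sumr.
    by apply: eq_bigr => j _; rewrite /Ms !Ms_entry; ring.
  by rewrite v1 u1 mulr1.
have frobMs : frob Ms <= 1.
  have := frob_ge0 Ms; have := frobE2 Ms; rewrite ipMs => H1 H2; nra.
have opt := hopt Ms frobMs; rewrite !minnerE in opt.
have key : ip T Ms - ip T Mh = ip E D + delta * ip Ms D.
  have hTE : T = E + delta *: Ms by rewrite /E subrK.
  by rewrite -ipBr -/D {1}hTE ipDl ipZl.
have hD2 : ip D D <= 2 * ip Ms D.
  have hMh2 : ip Mh Mh <= 1.
    by rewrite -frobE2; have := frob_ge0 Mh; nra.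
  rewrite /D !ipBl !ipBr ipMs (ipC Mh Ms); lra.
have hdual : - ip E D <= lambda * grpnorm J D by apply: dual_bound.
have hsplit := @grp_split R p q G J v u Mh.
have hsp := @sparse_bound R p q G k J (fun g => [exists j in J g, v j ord0 != 0]) D C1 (ltW C1pos) hC hk.
set F := frob D.
have F0 : 0 <= F by exact: frob_ge0.
set K := Num.sqrt (C1 * q%:R * k%:R).
have K0 : 0 <= K by exact: sqrtr_ge0.
have hKF : Num.sqrt (k%:R) * Num.sqrt (q%:R * (C1 * F ^+ 2)) = K * F.
  rewrite -sqrtrM ?ler0n //.
  have -> : k%:R * (q%:R * (C1 * F ^+ 2)) = (C1 * q%:R * k%:R) * F ^+ 2 by ring.
  by rewrite sqrtrM ?sqrtr_sqr ?ger0_norm // mulr_ge0 // ?ler0n // mulr_ge0 // ltW.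
rewrite hKF in hsp.
set X := \sum_(g | _) _ in hsplit hsp.
have step1 : ip T Ms - ip T Mh <= lambda * (grpnorm J Ms - grpnorm J Mh).
  rewrite mulrBr; lra.
have step2 : delta * ip Ms D <= lambda * (2 * X).
  apply: le_trans (_ : _ <= lambda * (grpnorm J D + grpnorm J Ms - grpnorm J Mh)) _.
    rewrite -addrA mulrDr; lra.
  by apply: ler_wpM2l => //; exact: ltW.
have step3 : delta * F ^+ 2 <= 4 * lambda * K * F.
  have FE : F ^+ 2 = ip D D by rewrite /F frobE2.
  rewrite FE.
  have : lambda * (2 * X) <= lambda * (2 * (K * F)).
    apply: ler_wpM2l; first exact: ltW.
    by rewrite ler_pM2l.
  have := ler_wpM2l (ltW dpos) hD2.
  lra.
have [F00|Fpos] := eqVneq F 0.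
  rewrite F00; apply: divr_ge0; last exact: ltW.
  by rewrite mulr_ge0 // mulr_ge0 // ltW.
have Fp : 0 < F by rewrite lt_neqAle eq_sym Fpos F0.
rewrite ler_pdivlMr //.
have : delta * F * F <= 4 * lambda * K * F by rewrite -mulrA -expr2.
rewrite ler_pM2r // mulrC //.
Qed.

End I.



Section J.
Variable R : realType.

Lemma sin_help m (x xh : 'cV[R]_m) a s :
  dotc x x = 1 -> dotc xh xh = 1 ->
  s ^+ 2 * (1 - dotc x xh ^+ 2) <= dotc (a *: x - s *: xh) (a *: x - s *: xh).
Proof.
move=> hx hxh.
rewrite dotBl !dotBr !dotZl !dotZr hx hxh (dotC xh x).
have := sqr_ge0 (a - s * dotc x xh); nra.
Qed.

Lemma mul11 p (v : 'cV[R]_p) (c : 'M[R]_1) : v *m c = c ord0 ord0 *: v.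
Proof.
apply/matrixP => i j; have -> : j = ord0 by apply/val_inj; case: j => [[]].
by rewrite !mxE big_ord1 mulrC.
Qed.

Lemma Msy p q (v : 'cV[R]_p) (u y : 'cV[R]_q) : (v *m u^T) *m y = dotc u y *: v.
Proof. by rewrite -mulmxA mul11 trdotc. Qed.

Lemma MsTx p q (v x : 'cV[R]_p) (u : 'cV[R]_q) : (v *m u^T)^T *m x = dotc v x *: u.
Proof. by rewrite trmx_mul trmxK -mulmxA mul11 trdotc. Qed.

Lemma sin_le1 m (a b : 'cV[R]_m) : sin_angle a b <= 1.
Proof.
apply: sqrt_leP => //; rewrite expr1n lerBlDr lerDl; exact: sqr_ge0.
Qed.

Lemma sin_final (s F B b : R) :
  0 <= F -> F <= B -> 2 * B < 1 -> 1 - F <= s ->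
  s ^+ 2 * (1 - b ^+ 2) <= F ^+ 2 -> 1 - b ^+ 2 <= (2 * B) ^+ 2.
Proof.
move=> F0 FB B1 sF H.
have [h|h] := lerP (1 - b ^+ 2) 0.
  by apply: le_trans h _; exact: sqr_ge0.
have s2 : 1 / 4 <= s ^+ 2 by nra.
have : (1 / 4) * (1 - b ^+ 2) <= s ^+ 2 * (1 - b ^+ 2).
  by apply: ler_wpM2r => //; exact: ltW.
nra.
Qed.

Lemma part2 p q (v : 'cV[R]_p) (u : 'cV[R]_q) (Mh : 'M[R]_(p, q)) vh uh B :
  vnorm v = 1 -> vnorm u = 1 -> frob (v *m u^T - Mh) <= B ->
  leading_singular_vectors Mh vh uh ->
  Num.max (sin_angle v vh) (sin_angle u uh) <= 2 * B.
Proof.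
move=> hv hu hF [s [[s0 nvh nuh Muh MTvh] smax]].
have [B1|B1] := lerP 1 (2 * B).
  by rewrite ge_max !(le_trans (sin_le1 _ _) B1).
have v1 := vnorm1 hv; have u1 := vnorm1 hu.
have vh1 := vnorm1 nvh; have uh1 := vnorm1 nuh.
set Ms := v *m u^T; set D := Ms - Mh.
set F := frob D.
have F0 : 0 <= F by exact: frob_ge0.
have hMh : Mh = Ms - D by rewrite /D opprB addrC subrK.
have hDu : dotc v (D *m u) <= F.
  have H1 := CSdotc v (D *m u).
  have H2 := opnorm D u.
  rewrite v1 u1 mul1r mulr1 -/F in H1 H2.
  nra.
have a0 : 1 - F <= dotc v (Mh *m u).
  rewrite hMh mulmxBl dotBr /Ms Msy dotZr u1 v1 mul1r; lra.
have FB : F <= B by exact: hF.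
have dpos : 0 < dotc v (Mh *m u) by lra.
have Mu0 : 0 < dotc (Mh *m u) (Mh *m u).
  have := CSdotc v (Mh *m u); rewrite v1 mul1r.
  have := mulr_gt0 dpos dpos; rewrite -expr2; lra.
have [s1 [x1 [y1 [tr1 hs1]]]] := top_triple u1 Mu0.
have s1s := smax _ _ _ tr1.
have [s10 _ _ _ _] := tr1.
have sF : 1 - F <= s.
  have H1 := CSdotc v (Mh *m u); rewrite v1 mul1r in H1.
  have H2 : (1 - F) ^+ 2 <= s1 ^+ 2.
    apply: le_trans hs1; apply: le_trans H1.
    by rewrite ler_pXn2r // ?nnegrE; lra.
  have H3 : 0 <= 1 - F by lra.
  rewrite -(ler_pXn2r (n:=2)) ?nnegrE //.
  by apply: le_trans H2 _; rewrite ler_pXn2r ?nnegrE.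
rewrite ge_max; apply/andP; split.
  rewrite /sin_angle trdotc; apply: sqrt_leP; first lra.
  apply: (@sin_final s F) => //.
  apply: le_trans (sin_help (dotc u uh) s v1 vh1) _.
  have -> : dotc u uh *: v - s *: vh = D *m uh.
    by rewrite -Muh /D mulmxBl /Ms Msy.
  by have := opnorm D uh; rewrite uh1 mulr1.
rewrite /sin_angle trdotc; apply: sqrt_leP; first lra.
apply: (@sin_final s F) => //.
apply: le_trans (sin_help (dotc v vh) s u1 uh1) _.
have -> : dotc v vh *: u - s *: uh = D^T *m vh.
  by rewrite -MTvh /D linearB /= mulmxBl /Ms MsTx.
by have := opnorm D^T vh; rewrite vh1 mulr1 frob_tr.
Qed.

End J.



Unset Implicit Arguments.

Theorem mainTheorem8 (R : realType) (p n G k : nat) (J : 'I_G -> {set 'I_p})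
  (C1 delta lambda : R) (v : 'cV[R]_p) (u : 'cV[R]_(n - 1))
  (T Mhat : 'M[R]_(p, n - 1)) (vhat : 'cV[R]_p) (uhat : 'cV[R]_(n - 1)) :
  (forall j : 'I_p, exists g : 'I_G, j \in J g) ->
  0 < C1 ->
  (forall j : 'I_p, (#|[set g : 'I_G | j \in J g]|%:R : R) <= C1) ->
  0 < delta ->
  vnorm v = 1 -> vnorm u = 1 ->
  (\sum_(g < G | [exists j in J g, v j ord0 != 0%R]) #|J g| <= k)%N ->
  0 < lambda ->
  grpdual J (T - delta *: (v *m u^T)) <= lambda ->
  frob Mhat <= 1 ->
  (forall M : 'M[R]_(p, n - 1), frob M <= 1 ->
     minner T M - lambda * grpnorm J M <= minner T Mhat - lambda * grpnorm J Mhat) ->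
  frob (v *m u^T - Mhat) <= 4 * lambda * Num.sqrt (C1 * n%:R * k%:R) / delta /\
  (leading_singular_vectors Mhat vhat uhat ->
   Num.max (sin_angle v vhat) (sin_angle u uhat)
     <= 8 * lambda * Num.sqrt (C1 * n%:R * k%:R) / delta).
Proof.
move=> cover C1pos hC dpos hv hu hk lpos hgd hMh hopt.
have P1 := part1 cover C1pos hC dpos hv hu hk lpos hgd hMh hopt.
have Kle : Num.sqrt (C1 * (n - 1)%:R * k%:R) <= Num.sqrt (C1 * n%:R * k%:R).
  rewrite ler_sqrt; last by rewrite mulr_ge0 ?ler0n // mulr_ge0 ?ler0n // ltW.
  apply: ler_wpM2r; first exact: ler0n.
  apply: ler_wpM2l; first exact: ltW.
  by rewrite ler_nat leq_subr.
have B : frob (v *m u^T - Mhat) <= 4 * lambda * Num.sqrt (C1 * n%:R * k%:R) / delta.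
  apply: le_trans P1 _.
  apply: ler_wpM2r; first by rewrite invr_ge0 ltW.
  by apply: ler_wpM2l => //; rewrite mulr_ge0 // ltW.
split => // lead.
have := part2 hv hu B lead.
have -> : 2 * (4 * lambda * Num.sqrt (C1 * n%:R * k%:R) / delta) =
          8 * lambda * Num.sqrt (C1 * n%:R * k%:R) / delta by ring.
done.
Qed.
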